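(* Let $G$ be a (claw, bull)-free graph, let $C$ be an induced cycle of $G$ of length $k\ge 4$, and let $x\in N(C)$. Then $N(x)$ contains two consecutive vertices of $C$. Moreover, if $k\ge 5$, then $N(x)$ contains three consecutive vertices of $C$.
   Context: A claw is a graph isomorphic to $K_{1,3}$; a bull is the graph obtained from a triangle by adding two pendant edges at two different vertices. A graph is (claw, bull)-free if it has no induced claw and no induced bull. For a set $X$ of vertices, $N(X)=\big(\bigcup_{x\in X}N(x)\big)\setminus X$ is its open neighborhood; $N(C)$ means $N(V(C))$. *)

(* Defs.v *)
From mathcomp Require Import all_boot.
Set Implicit Arguments. Unset Strict Implicit. Unset Printing Implicit Defensive.

Definition simple_graph (T : finType) (e : rel T) : Prop :=
  symmetric e /\ irreflexive e.

Definition induced_claw (T : finType) (e : rel T) (a b c d : T) : Prop :=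
  uniq [:: a; b; c; d] /\ e a b /\ e a c /\ e a d /\
  ~~ e b c /\ ~~ e b d /\ ~~ e c d.

(* Induced bull: triangle a b c, pendant d at a, pendant f at b. *)
Definition induced_bull (T : finType) (e : rel T) (a b c d f : T) : Prop :=
  uniq [:: a; b; c; d; f] /\ e a b /\ e b c /\ e a c /\ e a d /\ e b f /\
  ~~ e b d /\ ~~ e c d /\ ~~ e a f /\ ~~ e c f /\ ~~ e d f.

Definition claw_free (T : finType) (e : rel T) : Prop :=
  forall a b c d, ~ induced_claw e a b c d.

Definition bull_free (T : finType) (e : rel T) : Prop :=
  forall a b c d f, ~ induced_bull e a b c d f.

Definition cyc_succ (k : nat) (i : nat) : nat := i.+1 %% k.

Definition induced_cycle (T : finType) (e : rel T) (k : nat)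
    (c : 'I_k -> T) : Prop :=
  injective c /\
  forall i j : 'I_k,
    e (c i) (c j) = (val j == cyc_succ k i) || (val i == cyc_succ k j).

Definition in_cycle_nbhd (T : finType) (e : rel T) (k : nat)
    (c : 'I_k -> T) (x : T) : Prop :=
  (forall i, x != c i) /\ exists i, e x (c i).

(* Main.v *)
Require Import Defs.
From mathcomp Require Import all_boot.
From mathcomp Require Import zify.

Theorem lemma2 (T : finType) (e : rel T) (k : nat) (c : 'I_k -> T) (x : T) :
  simple_graph e -> claw_free e -> bull_free e ->
  4 <= k -> induced_cycle e c -> in_cycle_nbhd e c x ->
  (exists i j : 'I_k, val j = cyc_succ k i /\ e x (c i) /\ e x (c j)) /\
  (5 <= k ->
   exists i j l : 'I_k, val j = cyc_succ k i /\ val l = cyc_succ k j /\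
     e x (c i) /\ e x (c j) /\ e x (c l)).
Proof.
move=> [esym eirr] clawf bullf k4 [cinj cadj] [xnc [i0 xi0]].
have k0 : 0 < k by lia.
have csE : forall n, n < k -> cyc_succ k n = if n.+1 == k then 0 else n.+1.
  move=> n nk; rewrite /cyc_succ; case: eqP => [->|ne]; first by rewrite modnn.
  rewrite modn_small //; lia.
have csF : forall i : 'I_k, ((nat_of_ord i).+1 = k /\ cyc_succ k i = 0) \/
     ((nat_of_ord i).+1 < k /\ cyc_succ k i = (nat_of_ord i).+1).
  move=> i; rewrite csE //; case: eqP => ?; [left|right]; split => //.
  have := ltn_ord i; lia.
pose S (i : 'I_k) : 'I_k := Ordinal (ltn_pmod i.+1 k0).
pose P (i : 'I_k) : 'I_k := Ordinal (ltn_pmod (i + k.-1) k0).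
have hS : forall i, ((nat_of_ord i).+1 = k /\ nat_of_ord (S i) = 0) \/
     ((nat_of_ord i).+1 < k /\ nat_of_ord (S i) = (nat_of_ord i).+1).
  by move=> i; apply: csF.
have hP : forall i : 'I_k, (nat_of_ord i = 0 /\ nat_of_ord (P i) = k.-1) \/
     (0 < nat_of_ord i /\ nat_of_ord (P i) = (nat_of_ord i).-1).
  move=> i /=; have [->|ne] := eqVneq (nat_of_ord i) 0; first by left; rewrite add0n modn_small; lia.
  have -> : i + k.-1 = (i.-1) + k by lia.
  right; rewrite modnDr modn_small //; have := ltn_ord i; lia.
have SS : forall i, val (S i) = cyc_succ k i by [].
clearbody S P.
have neq : forall i j : 'I_k, val i != val j -> c i != c j.
  by move=> i j; rewrite (inj_eq cinj).
have xn : forall i, c i != x by move=> i; rewrite eq_sym.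
Ltac facts S P csF hS hP :=
  repeat match goal with
  | |- context [cyc_succ ?k (nat_of_ord ?a)] =>
      have := csF a; generalize (cyc_succ k (nat_of_ord a)) => ?
  end;
  repeat match goal with
  | |- context [nat_of_ord (S ?a)] =>
      have := hS a; generalize (nat_of_ord (S a)) => ?
  | |- context [nat_of_ord (P ?a)] =>
      have := hP a; generalize (nat_of_ord (P a)) => ?
  end;
  repeat match goal with
  | |- context [nat_of_ord ?a] =>
      have := ltn_ord a; generalize (nat_of_ord a) => ?
  end.
have SP : forall i, val i = cyc_succ k (P i).
  by move=> i /=; facts S P csF hS hP; lia.
have claw : forall i, e x (c i) -> e x (c (P i)) || e x (c (S i)).
  move=> i xi; apply/negPn/negP; rewrite negb_or => /andP [h1 h2].
  apply: (clawf (c i) x (c (P i)) (c (S i))).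
  split; first rewrite /= !inE !negb_or.
    rewrite !neq ?(eq_sym x) ?xnc ?xn //=;
    by facts S P csF hS hP; lia.
  rewrite esym xi h1 h2 !cadj /=.
  by facts S P csF hS hP; lia.
have part1 : exists i j : 'I_k, val j = cyc_succ k i /\ e x (c i) /\ e x (c j).
  case/orP: (claw i0 xi0) => h.
    by exists (P i0), i0; rewrite -SP.
  by exists i0, (S i0); rewrite SS.
split=> // k5.
case: part1 => i [j [ji [xi xj]]].
have jS : j = S i by apply: val_inj; rewrite SS.
subst j.
case hP' : (e x (c (P i))).
  by exists (P i), i, (S i); rewrite -SP SS.
case hS' : (e x (c (S (S i)))).
  by exists i, (S i), (S (S i)); rewrite !SS.
exfalso; apply: (bullf (c i) (c (S i)) x (c (P i)) (c (S (S i)))).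
split.
  rewrite /= !inE !negb_or.
  rewrite !neq ?(eq_sym x) ?xnc ?xn //=;
  by facts S P csF hS hP; lia.
rewrite (esym (c (S i)) x) (esym (c i) x) xi xj hP' hS' !cadj /=.
by facts S P csF hS hP; lia.
Qed.
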